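(* Let $\lambda$ and $\rho$ be two function quasi-norms over the same $\sigma$-finite measure space $(\Omega,\Sigma,\mu)$, and suppose $\rho$ has the weak Fatou property. Then $\rho$ dominates $\lambda$ if and only if $\{f\in L_0^+(\mu):\rho(f)<\infty\}\subseteq\{f\in L_0^+(\mu):\lambda(f)<\infty\}$.
   Context: $L_0^+(\mu)$: measurable functions $\Omega\to[0,\infty]$ modulo a.e. equality. A function quasi-norm is $\rho\colon L_0^+(\mu)\to[0,\infty]$ with (F1) $\rho(tf)=t\rho(f)$, $t\ge0$; (F2) $f\le g$ a.e. $\Rightarrow\rho(f)\le\rho(g)$; (F3) $\rho(\chi_E)<\infty$ if $\mu(E)<\infty$; (F4) for all $E$ with $\mu(E)<\infty$ and $\varepsilon>0$ there is $\delta>0$ with $\mu(A)\le\varepsilon$ whenever $A\subseteq E$ measurable and $\rho(\chi_A)\le\delta$; (F5) $\rho(f+g)\le\kappa(\rho(f)+\rho(g))$ for some constant $\kappa$. $\rho$ dominates $\lambda$ if there is $C$ with $\lambda(f)\le C\rho(f)$ for all $f\in L_0^+(\mu)$. $\rho$ has the weak Fatou property if $\rho(\lim_nf_n)<\infty$ for every non-decreasing $(f_n)$ in $L_0^+(\mu)$ with $\lim_n\rho(f_n)<\infty$. *)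

(* Defs.v *)
From HB Require Import structures.
From mathcomp Require Import all_boot all_order all_algebra.
From mathcomp Require Import all_classical all_reals all_analysis.
From mathcomp Require Import measurable_realfun.
Set Implicit Arguments. Unset Strict Implicit. Unset Printing Implicit Defensive.
Import Order.TTheory GRing.Theory Num.Theory.
Local Open Scope classical_set_scope.
Local Open Scope ring_scope.
Local Open Scope ereal_scope.

Section FQN.
Context (d : measure_display) (T : measurableType d) (R : realType)
  (mu : {measure set T -> \bar R}).

(* L_0^+(mu): measurable functions T -> [0, +oo] (a.e. classes are handled
   by quantifying over representatives; (F2) makes rho a.e.-invariant). *)
Definition L0p (f : T -> \bar R) : Prop :=
  measurable_fun [set: T] f /\ (forall x, 0 <= f x).

Definition chi (A : set T) : T -> \bar R := fun x => (\1_A x)%:E.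

Definition function_quasi_norm (rho : (T -> \bar R) -> \bar R) : Prop :=
  (forall f, L0p f -> 0 <= rho f) /\
  (forall (t : R) f, L0p f -> (0 <= t)%R ->
      rho (fun x => t%:E * f x) = t%:E * rho f) /\
  (* (F2) *)
  (forall f g, L0p f -> L0p g -> {ae mu, forall x, f x <= g x} ->
      rho f <= rho g) /\
  (forall E, measurable E -> mu E < +oo -> rho (chi E) < +oo) /\
  (forall E, measurable E -> mu E < +oo -> forall eps : R, (0 < eps)%R ->
      exists2 delta : R, (0 < delta)%R &
        forall A, measurable A -> A `<=` E -> rho (chi A) <= delta%:E ->
          mu A <= eps%:E) /\
  (exists kappa : R, forall f g, L0p f -> L0p g ->
      rho (f \+ g) <= kappa%:E * (rho f + rho g)).

Definition dominates (rho lambda : (T -> \bar R) -> \bar R) : Prop :=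
  exists C : R, forall f, L0p f -> lambda f <= C%:E * rho f.

Definition weak_Fatou (rho : (T -> \bar R) -> \bar R) : Prop :=
  forall f : nat -> T -> \bar R,
    (forall n, L0p (f n)) ->
    (forall n x, f n x <= f n.+1 x) ->
    limn (fun n => rho (f n)) < +oo ->
    rho (fun x => limn (fun n => f n x)) < +oo.

End FQN.

(* Main.v *)
Require Import Defs.
From HB Require Import structures.
From mathcomp Require Import all_boot all_order all_algebra.
From mathcomp Require Import all_classical all_reals all_analysis.
From mathcomp Require Import measurable_realfun.
From mathcomp Require Import lra.
Import Order.TTheory GRing.Theory Num.Theory.
Local Open Scope classical_set_scope.
Local Open Scope ring_scope.
Local Open Scope ereal_scope.

Fixpoint tailsum {T : Type} {R : realType} (g : nat -> T -> \bar R) (m N : nat)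
  : T -> \bar R :=
  match N with
  | 0 => fun _ => 0
  | N'.+1 => fun x => g m x + tailsum g m.+1 N' x
  end.

Theorem proposition3p16 (d : measure_display) (T : measurableType d)
  (R : realType) (mu : {measure set T -> \bar R})
  (lambda rho : (T -> \bar R) -> \bar R) :
  sigma_finite setT mu ->
  function_quasi_norm mu lambda ->
  function_quasi_norm mu rho ->
  weak_Fatou rho ->
  dominates rho lambda <->
  (forall f, L0p f -> rho f < +oo -> lambda f < +oo).
Proof.
move=> _ [l0 [lF1 [lF2 _]]] [r0 [rF1 [rF2 [_ [_ [kappa rF5]]]]]] wF.
split.
  move=> [C HC] f Lf rf.
  have := r0 f Lf; case E : (rho f) => [a| |] //= a0.
    by apply: le_lt_trans (HC f Lf) _; rewrite E -EFinM ltry.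
  by rewrite E in rf.
move=> Hinc; apply: contrapT => ndom.
pose k := Num.max kappa 1%R.
have k1 : (1 <= k)%R by rewrite /k le_max lexx orbT.
have k0 : (0 < k)%R by apply: lt_le_trans k1.
have F5 : forall f g, L0p f -> L0p g -> rho (f \+ g) <= k%:E * (rho f + rho g).
  move=> f g Lf Lg; apply: le_trans (rF5 f g Lf Lg) _.
  apply: lee_wpmul2r; first by apply: adde_ge0; [exact: r0|exact: r0].
  by rewrite lee_fin /k le_max lexx.
pose r := (2 * k)^-1%R.
have r0' : (0 < r)%R by rewrite /r invr_gt0 mulr_gt0.
have kr : (2 * k * r = 1)%R by rewrite /r mulfV // gt_eqF // mulr_gt0.
have Hn : forall n : nat, exists g, L0p g /\ rho g <= (r ^+ n)%:E /\
    (n%:R)%:E <= lambda g.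
  move=> n.
  have pn : (0 < r ^+ n)%R by apply: exprn_gt0.
  pose C := (n.+1%:R / r ^+ n)%R.
  have C0 : (0 < C)%R by rewrite /C divr_gt0.
  have : ~ (forall f, L0p f -> lambda f <= C%:E * rho f).
    by move=> h; apply: ndom; exists C.
  move=> /existsNP [f] /not_implyP [Lf] /negP; rewrite -ltNge => Hlt.
  have := r0 f Lf; case Ef : (rho f) => [a| |] //= a0; last first.
    by move: Hlt; rewrite Ef gt0_muley ?lte_fin // ltNge leey.
  have := Hinc f Lf; rewrite Ef ltry => /(_ isT).
  have := l0 f Lf; case El : (lambda f) => [b| |] //= b0 _.
  move: Hlt; rewrite Ef El -EFinM lte_fin => Hlt.
  rewrite lee_fin in a0; rewrite lee_fin in b0.
  have bpos : (0 < b)%R by apply: le_lt_trans Hlt; rewrite mulr_ge0 // ltW.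
  pose t := (n%:R / b)%R.
  have t0 : (0 <= t)%R by rewrite /t divr_ge0 // ltW.
  exists (fun x => t%:E * f x); split; [split|split].
  - by apply: measurable_funeM; case: Lf.
  - by move=> x; apply: mule_ge0; [rewrite lee_fin|case: Lf].
  - rewrite rF1 // Ef -EFinM lee_fin /t.
    have key : (n%:R * a <= r ^+ n * b)%R.
      have h1 : (n.+1%:R * a < r ^+ n * b)%R.
        have := Hlt; rewrite /C -(ltr_pM2l pn) => h.
        by apply: le_lt_trans h; rewrite mulrA mulrCA divff ?gt_eqF // mulr1.
      apply: le_trans (ltW h1); apply: ler_wpM2r => //.
      by rewrite ler_nat.
    by rewrite mulrAC ler_pdivrMr.
  - by rewrite lF1 // El -EFinM lee_fin /t divfK // gt_eqF.
have [g Hg] := choice Hn.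
have Lt : forall N m, L0p (tailsum g m N).
  elim=> [|N IH] m /=.
    by split=> // ; exact: measurable_cst.
  have [Lg _] := Hg m; have [mt nt] := IH m.+1; case: Lg => mg ng.
  split; first exact: emeasurable_funD.
  by move=> x; apply: adde_ge0.
have step : forall N m x, tailsum g m N x <= tailsum g m N.+1 x.
  elim=> [|N IH] m x /=.
    by rewrite adde0; have [[_ ->]] := Hg m.
  by apply: leeD2l; apply: IH.
have gle : forall N m x, g (m + N)%N x <= tailsum g m N.+1 x.
  elim=> [|N IH] m x /=.
    by rewrite addn0 adde0.
  rewrite -addSnnS; apply: lee_paddl; first by have [[_ ->]] := Hg m.
  exact: IH.
have bound : forall N m, rho (tailsum g m N) <= (2 * k * r ^+ m)%:E.
  elim=> [|N IH] m /=.
    have -> : (fun _ : T => (0 : \bar R)) = (fun x => 0%R%:E * (fun _ => 0) x).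
      by apply: funext => x; rewrite mul0e.
    have L00 : L0p (fun _ : T => (0 : \bar R)) by split=> //; exact: measurable_cst.
    rewrite (rF1 0%R _ L00 (lexx _)) mul0e lee_fin.
    by rewrite ltW // !mulr_gt0 // exprn_gt0.

  have [Lgm [rg _]] := Hg m.
  apply: le_trans (F5 _ _ Lgm (Lt N m.+1)) _.
  apply: le_trans (_ : k%:E * ((r ^+ m)%:E + (2 * k * r ^+ m.+1)%:E) <= _).
    by apply: lee_wpmul2l; [rewrite lee_fin ltW|apply: leeD].
  rewrite -EFinD -EFinM lee_fin exprS !mulrA kr mul1r.
  nra.
pose G := fun x => limn (fun n => tailsum g 0 n x).
have nd : forall x, nondecreasing_seq (fun n => tailsum g 0 n x).
  by move=> x; apply/nondecreasing_seqP => n; apply: step.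
have gG : forall n x, g n x <= G x.
  move=> n x; apply: lime_ge; first exact: ereal_nondecreasing_is_cvgn.
  exists n.+1 => // M /= hM.
  have := gle n 0%N x; rewrite add0n => h; apply: le_trans h _; exact: nd.
have LG : L0p G.
  split.
    apply: (emeasurable_fun_cvg (fun n => tailsum g 0%N n)).
      by move=> m; case: (Lt m 0%N).
    by move=> x _; apply: ereal_nondecreasing_is_cvgn.
  by move=> x; apply: le_trans (gG 0%N x); have [[_ ->]] := Hg 0%N.
have rG : rho G < +oo.
  apply: wF.
  - by move=> n; exact: Lt.
  - by move=> n x; exact: step.
  apply: (@le_lt_trans _ _ (2 * k * r ^+ 0)%:E); last exact: ltry.
  apply: lime_le; last by apply: nearW => N; exact: bound.
  apply: ereal_nondecreasing_is_cvgn; apply/nondecreasing_seqP => n.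
  apply: rF2; [exact: Lt|exact: Lt|].
  by apply: aeW => x; exact: step.
have := Hinc G LG rG.
have := l0 G LG; case EG : (lambda G) => [c| |] //= c0 _.
have : (Num.truncn c).+1%:R%:E <= lambda G.
  have [Lgn [_ hn]] := Hg (Num.truncn c).+1.
  apply: le_trans hn _; apply: lF2 => //.
  by apply: aeW => x; exact: gG.
by rewrite EG lee_fin leNgt truncnS_gt.
Qed.
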